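(* Let $G=(V,E)$ be a finite simple undirected graph with $|V|=n\ge 1$ and adjacency matrix $A$. Let $\lambda_1\ge\dots\ge\lambda_n$ be the eigenvalues of $A$ (listed with multiplicity), fix an orthonormal basis of $\mathbb{R}^n$ consisting of eigenvectors of $A$ (the $j$-th eigenvector having eigenvalue $\lambda_j$), and let $\mu_1,\dots,\mu_n$ be the coordinates of the all-ones vector $\mathbf{1}_n$ with respect to this basis. Let $k\ge 1$ and let $$f(\mathbf{x})=\sum_{\alpha\in\mathbb{N}^k} c_\alpha\, x_1^{\alpha_1}\cdots x_k^{\alpha_k}\in\mathbb{R}[x_1,\dots,x_k],$$ with $c_\alpha\in\mathbb{R}$ and $c_\alpha=0$ for all but finitely many $\alpha$. Then there are numbers $\gamma(i_1,\dots,i_k)>0$ such that $$\sum_{\alpha\in\mathbb{N}^k} c_\alpha\, w_{\alpha_1}\cdots w_{\alpha_k}=\sum_{1\le i_1\le\dots\le i_k\le n}\gamma(i_1,\dots,i_k)\, f_{\mathrm{sym}}(\lambda_{i_1},\dots,\lambda_{i_k})\,\mu_{i_1}^2\cdots\mu_{i_k}^2 .$$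
   Context: $\mathbb{N}$ denotes the nonnegative integers. For $j\in\mathbb{N}$, $w_j=w_j(G)$ denotes the total number of walks of length $j$ in $G$ (a walk is a sequence of vertices in which consecutive vertices are adjacent; vertices and edges may repeat; the length is the number of edges), so $w_0=n$ and $w_j=\mathbf{1}_n^T A^j\mathbf{1}_n$. For a polynomial $f\in\mathbb{R}[x_1,\dots,x_k]$, its symmetrization is $f_{\mathrm{sym}}(\mathbf{x})=\sum_{\sigma\in S_k} f(x_{\sigma(1)},\dots,x_{\sigma(k)})$. *)

(* Defs.v *)
From HB Require Import structures.
From mathcomp Require Import all_boot all_order all_algebra all_fingroup.
From mathcomp Require Export mpoly.
Set Implicit Arguments. Unset Strict Implicit. Unset Printing Implicit Defensive.
Import Order.TTheory GRing.Theory Num.Theory.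
Local Open Scope ring_scope.

Definition adjmx (R : nzRingType) (n : nat) (e : rel 'I_n) : 'M[R]_n :=
  \matrix_(i, j) (e i j)%:R.

(* w_j = 1^T A^j 1 : total number of walks of length j *)
Definition walks (R : nzRingType) (n : nat) (e : rel 'I_n) (j : nat) : R :=
  \sum_(u < n) \sum_(v < n) ((adjmx R e) ^+ j) u v.

Definition sympoly_eval (R : comNzRingType) (k : nat) (f : {mpoly R[k]}) (x : 'I_k -> R) : R :=
  \sum_(s : 'S_k) f.@[fun i => x (s i)].

Definition walk_eval (R : comNzRingType) (n k : nat) (e : rel 'I_n) (f : {mpoly R[k]}) : R :=
  \sum_(m <- msupp f) f@_m * \prod_(i < k) walks R e (m i).

(* Main.v *)
Require Import Defs.
From HB Require Import structures.
From mathcomp Require Import all_boot all_order all_algebra all_fingroup.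
From mathcomp Require Import mpoly.
Set Implicit Arguments. Unset Strict Implicit. Unset Printing Implicit Defensive.
Import Order.TTheory GRing.Theory Num.Theory.
Local Open Scope ring_scope.


Definition sortedb n k (s : {ffun 'I_k -> 'I_n}) :=
  [forall a : 'I_k, forall b : 'I_k, (a <= b)%N ==> (s a <= s b)%N].

Definition leo n : rel 'I_n := fun x y => (x <= y)%N.

Definition sortf n k (t : {ffun 'I_k -> 'I_n}) : {ffun 'I_k -> 'I_n} :=
  [ffun a => tnth (sort_tuple (@leo n) [tuple t i | i < k]) a].

Lemma leo_tr n : transitive (@leo n).
Proof. by move=> y x z; apply: leq_trans. Qed.
Lemma leo_tot n : total (@leo n).
Proof. by move=> x y; apply: leq_total. Qed.

Lemma sortf_sorted n k (t : {ffun 'I_k -> 'I_n}) : sortedb (@sortf n k t).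
Proof.
apply/forallP => a; apply/forallP => b; apply/implyP => hab.
rewrite !ffunE !(tnth_nth (t a)) /=.
apply: (sorted_leq_nth (@leo_tr n) (fun x => leqnn _) (t a) (sort_sorted (@leo_tot n) _)) => //.
all: by rewrite inE /= size_sort size_map size_enum_ord.

Qed.

Lemma sortf_perm n k (t : {ffun 'I_k -> 'I_n}) : exists p : 'S_k, forall a, t a = @sortf n k t (p a).
Proof.
have : perm_eq [tuple t i | i < k] (sort_tuple (@leo n) [tuple t i | i < k]).
  by rewrite /= perm_sym perm_sort.
move/tuple_permP => [p Hp]; exists p => a.
have /(congr1 (fun u => tnth u a)) := val_inj Hp.
by rewrite !tnth_mktuple ffunE.
Qed.

Lemma sortf_id n k (s : {ffun 'I_k -> 'I_n}) : sortedb s -> @sortf n k s = s.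
Proof.
move=> hs.
have hsort : sorted (@leo n) [tuple s i | i < k].
  case: k s hs => [|k] s hs; first by rewrite /= (_ : enum 'I_0 = [::]) // ; apply: size0nil; rewrite size_enum_ord.
  apply/(sortedP (s ord0)) => i; rewrite size_tuple => hi.
  have hi' : (i < k.+1)%N by apply: ltnW.
  rewrite -[i]/(nat_of_ord (Ordinal hi')) -[i.+1]/(nat_of_ord (Ordinal hi)) !nth_mktuple.
  by move/forallP: hs => /(_ (Ordinal hi')) /forallP /(_ (Ordinal hi)) /implyP; apply => /=.
apply/ffunP => a; rewrite ffunE.
have -> : sort_tuple (@leo n) [tuple s i | i < k] = [tuple s i | i < k].
  by apply: val_inj; rewrite /= (sorted_sort (@leo_tr n) hsort).
by rewrite tnth_mktuple.
Qed.

Lemma orbit_sum (R : numFieldType) n k (F : {ffun 'I_k -> 'I_n} -> R) :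
 exists gamma : {ffun 'I_k -> 'I_n} -> R, (forall s, sortedb s -> 0 < gamma s) /\
 \sum_t F t = \sum_(s | sortedb s) gamma s * \sum_(p : 'S_k) F [ffun a => s (p a)].
Proof.
pose H (t : {ffun 'I_k -> 'I_n}) := \sum_(p : 'S_k) F [ffun a => t (p a)].
have HI : forall (t : {ffun 'I_k -> 'I_n}) (q : 'S_k), H [ffun a => t (q a)] = H t.
  move=> t q; rewrite /H [RHS](reindex_inj (mulIg q)) /=.
  by apply: eq_bigr => p _; congr F; apply/ffunP => a; rewrite !ffunE permM.
have Hsum : \sum_t H t = k`!%:R * \sum_t F t.
  rewrite /H exchange_big /=.
  rewrite (eq_bigr (fun _ => \sum_t F t)); last first.
    move=> p _; symmetry.
    have inj : injective (fun t : {ffun 'I_k -> 'I_n} => [ffun a => t (p a)]).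
      move=> t1 t2 /ffunP E; apply/ffunP => a; have := E ((p^-1)%g a).
      by rewrite !ffunE permKV.
    exact: (reindex_inj inj).
  rewrite (eq_bigl (fun p => p \in [set: 'S_k])); last by move=> p; rewrite inE.
  by rewrite sumr_const cardsT card_Sn mulr_natl.
pose gamma (s : {ffun 'I_k -> 'I_n}) := (k`!%:R)^-1 * (#|[pred t | sortf t == s]|%:R : R).
exists gamma; split.
  move=> s hs; rewrite /gamma mulr_gt0 // ?invr_gt0 ?ltr0n ?fact_gt0 //.
  apply/card_gt0P; exists s; by rewrite inE sortf_id.
have kne : (k`!%:R : R) != 0 by rewrite pnatr_eq0 -lt0n fact_gt0.
have -> : \sum_t F t = (k`!%:R)^-1 * \sum_t H t by rewrite Hsum mulKf.
rewrite (partition_big (@sortf n k) (@sortedb n k)) /=; last by move=> t _; apply: sortf_sorted.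
rewrite big_distrr /=; apply: eq_bigr => s hs.
rewrite (eq_bigr (fun _ => H s)); last first.
  move=> t /eqP <-; have [p Hp] := sortf_perm t.
  have E : t = [ffun a => sortf t (p a)] by apply/ffunP => a; rewrite ffunE.
  by rewrite [in LHS]E HI.
rewrite sumr_const /gamma -mulrA mulr_natl.
done.
Qed.

Theorem proposition1 (R : realFieldType) (n : nat) (e : rel 'I_n)
  (e_sym : ssrbool.symmetric e) (e_irr : irreflexive e) (n_ge1 : (0 < n)%N)
  (lambda : 'I_n -> R) (P : 'M[R]_n) (mu : 'I_n -> R)
  (lambda_noninc : forall i j : 'I_n, (i <= j)%N -> lambda j <= lambda i)
  (P_orth : P^T *m P = 1%:M)
  (P_eig : forall j : 'I_n, adjmx R e *m col j P = lambda j *: col j P)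
  (mu_coord : const_mx 1 = \sum_(j < n) mu j *: col j P)
  (k : nat) (k_ge1 : (0 < k)%N) (f : {mpoly R[k]}) :
  exists gamma : {ffun 'I_k -> 'I_n} -> R,
    (forall t : {ffun 'I_k -> 'I_n},
        (forall a b : 'I_k, (a <= b)%N -> (t a <= t b)%N) -> 0 < gamma t) /\
    (@walk_eval R n k e f) =
      \sum_(t : {ffun 'I_k -> 'I_n} |
              [forall a : 'I_k, forall b : 'I_k, (a <= b)%N ==> (t a <= t b)%N])
        gamma t * (@sympoly_eval R k f (fun a => lambda (t a))) * \prod_(a < k) (mu (t a)) ^+ 2.
Proof.
set A := adjmx R e.
have hAP : A *m P = P *m diag_mx (\row_i lambda i).
  apply/matrixP => u v; rewrite mul_mx_diag !mxE.
  have := congr1 (fun M : 'cV[R]_n => M u 0) (P_eig v); rewrite !mxE => H; rewrite mulrC -H.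
  by apply: eq_bigr => w _; rewrite !mxE.
have hApow : forall j, A ^+ j *m P = P *m diag_mx (\row_i lambda i ^+ j).
  elim=> [|j IH].
    rewrite expr0 mul1mx mul_mx_diag; apply/matrixP => u v; rewrite !mxE.
    by rewrite expr0 mulr1.
  rewrite exprS -mulmxE -mulmxA IH mulmxA hAP -mulmxA mulmx_diag; congr (_ *m diag_mx _).
  by apply/rowP => i; rewrite !mxE exprS.
pose m := \col_i mu i.
have hones : (const_mx 1 : 'cV[R]_n) = P *m m.
  rewrite mu_coord; apply/matrixP => u z; rewrite summxE !mxE.
  by apply: eq_bigr => j _; rewrite !mxE mulrC.
have hw : forall j, walks R e j = \sum_i mu i ^+ 2 * lambda i ^+ j.
  move=> j.
  have -> : walks R e j = ((const_mx 1 : 'cV[R]_n)^T *m (A ^+ j *m (const_mx 1 : 'cV[R]_n))) 0 0.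
    rewrite /walks mxE; apply: eq_bigr => u _; rewrite !mxE mul1r.
    by apply: eq_bigr => v _; rewrite mxE mulr1.
  rewrite hones trmx_mul (mulmxA (A ^+ j)) hApow -!mulmxA (mulmxA (P^T)) P_orth mul1mx.
  rewrite mxE; apply: eq_bigr => i _; rewrite mul_diag_mx !mxE.
  by rewrite mulrCA mulrC expr2.
pose F (t : {ffun 'I_k -> 'I_n}) := (\prod_a mu (t a) ^+ 2) * f.@[fun a => lambda (t a)].
have step : walk_eval e f = \sum_t F t.
  rewrite /walk_eval (eq_bigr (fun mm => f@_mm * \sum_(t : {ffun 'I_k -> 'I_n})
        \prod_a (mu (t a) ^+ 2 * lambda (t a) ^+ mm a))); last first.
    move=> mm _; congr (_ * _).
    rewrite (eq_bigr (fun a => \sum_i mu i ^+ 2 * lambda i ^+ mm a)); last by move=> a _; rewrite hw.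
    by rewrite bigA_distr_bigA.
  under eq_bigr do rewrite big_distrr.
  rewrite exchange_big /=; apply: eq_bigr => t _.
  rewrite /F mevalE big_distrr; apply: eq_bigr => mm _.
  by rewrite big_split /= mulrCA.
have [gamma [gpos geq]] := orbit_sum F.
exists gamma; split.
  move=> t ht; apply: gpos; apply/forallP => a; apply/forallP => b; apply/implyP; exact: ht.
rewrite step geq; apply: eq_bigr => s _; rewrite /sympoly_eval -mulrA; congr (_ * _).
rewrite mulrC big_distrr; apply: eq_bigr => p _; rewrite /F.
congr (_ * _).
  symmetry; rewrite (reindex_inj (@perm_inj _ p)) /=.
  by apply: eq_bigr => a _; rewrite ffunE.
by apply: meval_eq => a; rewrite ffunE.
Qed.
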